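(* Let $G=(V,E)$ be a finite, simple, undirected, loopless graph with at least one wedge. For each vertex $v$ let $N_1(v)$ be the closed neighborhood of $v$ (the set consisting of $v$ and all vertices adjacent to $v$), let $W_v$ be the set of wedges centered at $v$ (so $|W_v|=\binom{d_v}{2}$, where $d_v$ is the degree of $v$), let $W$ be the set of all wedges, and let $p_v=|W_v|/|W|$. Let $\mathrm{cut}(S)$ denote the number of edges with exactly one endpoint in $S\subseteq V$, and let $\kappa$ be the global clustering coefficient of $G$. Then $$\sum_{v\in V} p_v\,\frac{\mathrm{cut}(N_1(v))}{|W_v|} = 2(1-\kappa),$$ where each summand $p_v\,\mathrm{cut}(N_1(v))/|W_v|$ is interpreted as $\mathrm{cut}(N_1(v))/|W|$ (which coincides with the literal expression whenever $|W_v|>0$). Equivalently, $\sum_{v\in V}\mathrm{cut}(N_1(v)) = 2(1-\kappa)|W|$.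
   Context: A wedge is an unordered pair of distinct edges sharing an endpoint, $\{(s,t),(s,u)\}$; its center is $s$. The wedge is closed if the edge $(t,u)$ is in $E$, and open otherwise. The global clustering coefficient is $\kappa = (\text{number of closed wedges})/|W|$. *)

(* Defs.v *)
From mathcomp Require Import all_boot all_order all_algebra.
Set Implicit Arguments. Unset Strict Implicit. Unset Printing Implicit Defensive.
Import GRing.Theory Num.Theory.

(* A finite simple undirected loopless graph: vertex type T : finType,
   adjacency e : rel T, assumed symmetric and irreflexive (hypotheses). *)
Section Graph.
Variables (T : finType) (e : rel T).

(* Edge set: unordered pairs {x,y} with x adjacent to y (x <> y by irreflexivity). *)
Definition edges : {set {set T}} :=
  [set E : {set T} | [exists x, exists y, (e x y) && (E == [set x; y])]].

Definition wedges : {set {set {set T}}} :=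
  [set w : {set {set T}} | [exists E1, exists E2,
      [&& E1 \in edges, E2 \in edges, E1 != E2,
          (E1 :&: E2) != set0 & w == [set E1; E2]]]].

Definition wedge_centered (v : T) (w : {set {set T}}) : bool :=
  [exists t, exists u, (t != u) && (w == [set [set v; t]; [set v; u]])].

Definition wedges_at (v : T) : {set {set {set T}}} :=
  [set w in wedges | wedge_centered v w].

Definition closed_wedge (w : {set {set T}}) : bool :=
  [exists s, exists t, exists u,
     (w == [set [set s; t]; [set s; u]]) && ([set t; u] \in edges)].

Definition closed_wedges : {set {set {set T}}} :=
  [set w in wedges | closed_wedge w].

Definition kappa : rat := (#|closed_wedges|%:R / #|wedges|%:R)%R.

Definition closed_nbhd (v : T) : {set T} := v |: [set x | e v x].

Definition cut (S : {set T}) : nat :=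
  #|[set E in edges | #|E :&: S| == 1%N]|.

End Graph.

(* Main.v *)
Require Import Defs.
From mathcomp Require Import all_boot all_order all_algebra.
Import GRing.Theory Num.Theory.
From mathcomp Require Import ring.
Set Implicit Arguments. Unset Strict Implicit. Unset Printing Implicit Defensive.

Lemma set2_eqP (U : finType) (a b c d : U) :
  [set a; b] = [set c; d] -> (a = c /\ b = d) \/ (a = d /\ b = c).
Proof.
move=> H.
have ha : a \in [set c; d] by rewrite -H set21.
have hb : b \in [set c; d] by rewrite -H set22.
have hc : c \in [set a; b] by rewrite H set21.
have hd : d \in [set a; b] by rewrite H set22.
move: ha hb hc hd; rewrite !inE.
case/orP=> /eqP ->; case/orP=> /eqP ->; try by auto.
- by move=> _ /orP[] /eqP ->; auto.
- by move=> /orP[] /eqP -> _; auto.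
Qed.

Lemma set2_center (U : finType) (x v y s t u : U) :
  s != t -> s != u -> t != u ->
  [set [set x; v]; [set x; y]] = [set [set s; t]; [set s; u]] ->
  x = s /\ ((v = t /\ y = u) \/ (v = u /\ y = t)).
Proof.
move=> st su tu /set2_eqP [[/set2_eqP H1 /set2_eqP H2]|[/set2_eqP H1 /set2_eqP H2]];
case: H1 => [[? ?]|[? ?]]; case: H2 => [[? ?]|[? ?]]; subst;
rewrite ?eqxx in st su tu *; by auto.
Qed.
Lemma edgeE (T : finType) (e : rel T) (e_sym : symmetric e) (t u : T) :
  ([set t; u] \in edges e) = e t u.
Proof.
rewrite inE; apply/existsP/idP => [[x /existsP [y /andP [exy /eqP H]]]|etu].
  case: (set2_eqP H) => [[-> ->]|[-> ->]] //; by rewrite e_sym.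
by exists t; apply/existsP; exists u; rewrite etu eqxx.
Qed.

Lemma neq_of_e (T : finType) (e : rel T) (e_irr : irreflexive e) x y :
  e x y -> x != y.
Proof. by apply: contraTneq => ->; rewrite e_irr. Qed.

Lemma wedgeP (T : finType) (e : rel T) (e_sym : symmetric e) (e_irr : irreflexive e) w :
  reflect (exists s t u, [/\ e s t, e s u, t != u & w = [set [set s; t]; [set s; u]]])
          (w \in wedges e).
Proof.
apply: (iffP idP).
  rewrite inE => /existsP [E1 /existsP [E2 /and5P [h1 h2 h12 hI /eqP ->]]].
  move: h1; rewrite inE => /existsP [a /existsP [b /andP [eab /eqP HE1]]].
  move: h2; rewrite inE => /existsP [c /existsP [d /andP [ecd /eqP HE2]]].
  subst E1 E2.
  case/set0Pn: hI => z; rewrite !inE => /andP [].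
  case/orP=> /eqP Hz1; case/orP=> /eqP Hz2; subst z.
  - subst c; exists a, b, d; split => //.
    by apply: (contraNneq _ h12) => ->.
  - subst d; exists a, b, c; split => //; first by rewrite e_sym.
      by apply: (contraNneq _ h12) => ->; rewrite setUC.
    by rewrite [[set c; a]]setUC.
  - subst c; exists b, a, d; split => //; first by rewrite e_sym.
      by apply: (contraNneq _ h12) => ->; rewrite setUC.
    by rewrite [[set a; b]]setUC.
  - subst d; exists b, a, c; split => //; try by rewrite e_sym.
      by apply: (contraNneq _ h12) => ->.
    by rewrite [[set a; b]]setUC [[set c; b]]setUC.
case=> [s [t [u [est esu tu ->]]]].
rewrite inE; apply/existsP; exists [set s; t]; apply/existsP; exists [set s; u].
rewrite !edgeE // est esu eqxx /= andbT; apply/andP; split.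
  apply/negP => /eqP /set2_eqP [[_ /eqP]|[_ ts]]; first by rewrite (negbTE tu).
  by move: est; rewrite ts e_irr.
by apply/set0Pn; exists s; rewrite !inE eqxx.
Qed.

Lemma closedE (T : finType) (e : rel T) (e_sym : symmetric e) (e_irr : irreflexive e) s t u :
  s != t -> s != u -> t != u ->
  closed_wedge e [set [set s; t]; [set s; u]] = e t u.
Proof.
move=> st su tu; apply/existsP/idP => [[s' /existsP [t' /existsP [u' /andP [/eqP H]]]]|etu].
  rewrite edgeE //.
  case: (set2_center st su tu (esym H)) => _ [[-> ->]|[-> ->]] //; by rewrite e_sym.
by exists s; apply/existsP; exists t; apply/existsP; exists u; rewrite eqxx edgeE.
Qed.
Definition Pt (T : finType) (e : rel T) x v y := [&& e x v, e x y, v != y & ~~ e v y].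

Lemma cardI2 (U : finType) (a b : U) (S : {set U}) : a != b ->
  #|[set a; b] :&: S| = ((a \in S) + (b \in S))%N.
Proof.
move=> ab; case aS: (a \in S); case bS: (b \in S).
- by rewrite (setIidPl _) ?cards2 ?ab // subUset !sub1set aS bS.
- suff -> : [set a; b] :&: S = [set a] by rewrite cards1.
  apply/setP => z; rewrite !inE; case: eqP => [->|_]; rewrite ?aS //=.
  by case: eqP => // ->; rewrite bS.
- suff -> : [set a; b] :&: S = [set b] by rewrite cards1.
  apply/setP => z; rewrite !inE; case: (eqVneq z b) => [->|_]; rewrite ?bS ?orbT //=.
  by case: eqP => // ->; rewrite aS.
- suff -> : [set a; b] :&: S = set0 by rewrite cards0.
  apply/setP => z; rewrite !inE; case: (eqVneq z b) => [->|_]; rewrite ?bS ?andbF //=.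
  by case: eqP => // ->; rewrite aS.
Qed.

Lemma sum_pairs (T : finType) (Q : T -> T -> bool) :
  #|[set p : T * T | Q p.1 p.2]| = (\sum_x \sum_y (Q x y : nat))%N.
Proof.
rewrite -sum1_card pair_big /= big_mkcond /=.
by apply: eq_bigr => p _; rewrite inE; case: (Q _ _).
Qed.

Lemma cut_count (T : finType) (e : rel T) (e_sym : symmetric e) (e_irr : irreflexive e) v :
  cut e (closed_nbhd e v) = (\sum_x \sum_y Pt e x v y)%N.
Proof.
rewrite -(sum_pairs (fun x y => Pt e x v y)) /cut.
set D := [set p : T * T | Pt e p.1 v p.2].
have -> : [set E in edges e | #|E :&: closed_nbhd e v| == 1%N] =
          [set [set p.1; p.2] | p in D].
  apply/setP => E; apply/idP/idP.
    rewrite inE => /andP [].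
    rewrite inE => /existsP [a /existsP [b /andP [eab /eqP ->]]].
    rewrite cardI2; last exact: (@neq_of_e _ e e_irr _ _ eab).
    rewrite /closed_nbhd !inE.
    have key : forall a b, e a b -> (a == v) || e v a -> ~~ ((b == v) || e v b) ->
        [set a; b] \in [set [set p.1; p.2] | p in D].
      move=> a' b' eab' ha hb; apply/imsetP; exists (a', b') => //.
      rewrite /D.
      rewrite inE /Pt /=; move: hb; rewrite negb_or => /andP [bv nvb].
      case/orP: ha => [/eqP av|eva].
        by move: nvb; rewrite -av eab'.
      by rewrite e_sym eva eab' eq_sym bv nvb.
    case ha: ((a == v) || e v a); case hb: ((b == v) || e v b) => //= _.
      by apply: key => //; rewrite hb.
    by rewrite setUC; apply: key; rewrite ?hb ?ha // e_sym.
  case/imsetP => -[x y]; rewrite /D inE /Pt /= => /and4P [exv exy vy nvy] ->.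
  rewrite inE edgeE // exy /= cardI2; last exact: (@neq_of_e _ e e_irr _ _ exy).
  rewrite /closed_nbhd !inE.
  by rewrite e_sym exv orbT (negbTE nvy) [y == v]eq_sym (negbTE vy).
rewrite card_in_imset //.
move=> [x y] [x' y'] Hxy Hxy'; move: Hxy Hxy'; rewrite /D !inE /Pt /= => /and4P [exv exy vy nvy] /and4P [exv' exy' vy' nvy'].
move/set2_eqP => [[-> ->] //|[xy yx]].
by move: nvy; rewrite yx e_sym exv'.
Qed.
Lemma open_count (T : finType) (e : rel T) (e_sym : symmetric e) (e_irr : irreflexive e) :
  (2 * #|wedges e :\: [set w | closed_wedge e w]|)%N =
  (\sum_v \sum_x \sum_y Pt e x v y)%N.
Proof.
set OW := wedges e :\: _.
rewrite exchange_big /= pair_bigA /= pair_bigA /=.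
rewrite (eq_bigr (fun t : T * T * T => if Pt e t.1.1 t.1.2 t.2 then 1%N else 0%N));
  last by move=> t _; case: Pt.
rewrite -big_mkcond /=.
pose f (t : T * T * T) := [set [set t.1.1; t.1.2]; [set t.1.1; t.2]].
rewrite (partition_big f (fun w => w \in OW)) /=; last first.
  move=> [[x v] y]; rewrite /Pt /= => /and4P [exv exy vy nvy].
  have xv := @neq_of_e _ e e_irr _ _ exv; have xy := @neq_of_e _ e e_irr _ _ exy.
  rewrite /f /= inE inE (@closedE _ e e_sym e_irr) // nvy /=.
  by apply/(@wedgeP _ e e_sym e_irr); exists x, v, y.
rewrite mulnC -sum_nat_const; apply: eq_bigr => w.
rewrite inE inE => /andP [ncl /(@wedgeP _ e e_sym e_irr) [s [t [u [est esu tu Hw]]]]].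
have st := @neq_of_e _ e e_irr _ _ est; have su := @neq_of_e _ e e_irr _ _ esu.
move: ncl; rewrite Hw (@closedE _ e e_sym e_irr) // => ntu.
rewrite sum1dep_card.
rewrite (@eq_card _ _ [set (s, t, u); (s, u, t)]); last first.
  move=> -[[x v] y]; rewrite !inE /Pt /f /=.
  apply/idP/idP.
    case/andP => _ /eqP /(set2_center st su tu) [-> [[-> ->]|[-> ->]]];
    by rewrite eqxx ?orbT.
  case/orP => /eqP [-> -> ->].
    by rewrite est esu tu ntu eqxx.
  by rewrite esu est eq_sym tu e_sym ntu setUC eqxx.
rewrite cards2.
have -> : ((s, t, u) != (s, u, t)) by apply/eqP => -[] /eqP; rewrite (negbTE tu).
by [].
Qed.

Local Open Scope ring_scope.

Theorem lemma1 (T : finType) (e : rel T)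
    (e_sym : symmetric e) (e_irr : irreflexive e)
    (hW : (0 < #|wedges e|)%N) :
  \sum_(v : T) ((cut e (closed_nbhd e v))%:R / (#|wedges e|)%:R : rat)
  = 2 * (1 - kappa e).
Proof.
rewrite -mulr_suml -natr_sum.
rewrite (eq_bigr _ (fun v _ => @cut_count _ e e_sym e_irr v)) -open_count //.
have HC : closed_wedges e = wedges e :&: [set w | closed_wedge e w].
  by apply/setP => w; rewrite !inE.
rewrite /kappa HC -(cardsID [set w | closed_wedge e w] (wedges e)) in hW *.
move: hW; set c := #|_ :&: _|; set o := #|_ :\: _| => hW.
have hn : ((c + o)%:R : rat) != 0 by rewrite pnatr_eq0 -lt0n.
rewrite natrM natrD in hn *.
field.
exact: hn.
Qed.
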